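(* For any code $\mathcal C\subseteq 2^{[n]}$, the canonical form of the code $\mathcal C\setminus n\subseteq 2^{[n-1]}$ consists exactly of the pseudo-monomials in $\mathrm{CF}(J_\mathcal C)$ that do not depend on $x_n$: $$\mathrm{CF}(J_{\mathcal C\setminus n})=\mathrm{CF}(J_\mathcal C)\setminus\{f\in\mathrm{CF}(J_\mathcal C): x_n \text{ or } (1-x_n)\text{ divides } f\}.$$
   Context: A code is a set $\mathcal C\subseteq 2^{[n]}$, $[n]=\{1,\dots,n\}$. Standing conventions: $\emptyset\in\mathcal C$; every neuron lies in some codeword; no two distinct neurons lie in exactly the same codewords. $\mathcal C\setminus n$ is the code on $[n-1]$ obtained by removing $n$ from every codeword. A pseudo-monomial in $\mathbb F_2[x_1,\dots,x_n]$ is $\prod_{i\in\sigma}x_i\prod_{j\in\tau}(1-x_j)$ with $\sigma\cap\tau=\emptyset$, ordered by divisibility. For a code $\mathcal D$ on $[m]$, $J_\mathcal D=\langle\rho_\sigma:\sigma\subseteq[m],\sigma\notin\mathcal D\rangle\subseteq\mathbb F_2[x_1,\dots,x_m]$ with $\rho_\sigma=\prod_{i\in\sigma}x_i\prod_{j\in[m]\setminus\sigma}(1-x_j)$, and $\mathrm{CF}(J_\mathcal D)$ is the set of minimal pseudo-monomials in $J_\mathcal D$. *)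

(* Defs.v *)
From HB Require Import structures.
From mathcomp Require Import all_boot all_algebra.
From mathcomp Require Import mpoly.
Set Implicit Arguments. Unset Strict Implicit. Unset Printing Implicit Defensive.
Import GRing.Theory.
Local Open Scope ring_scope.

Notation F2 := ('F_2).
Notation poly2 n := {mpoly F2[n]}.

Definition code (n : nat) := {set {set 'I_n}}.

Definition code_conv (n : nat) (C : code n) : Prop :=
  [/\ set0 \in C,
      (forall i : 'I_n, exists2 c, c \in C & i \in c) &
      (forall i j : 'I_n, i != j -> exists2 c, c \in C & (i \in c) != (j \in c))].

(* C \ n : remove the last neuron (ord_max) from every codeword; code on [n-1]. *)
Definition code_del_last (m : nat) (C : code m.+1) : code m :=
  [set [set i : 'I_m | widen_ord (leqnSn m) i \in c] | c : {set 'I_m.+1} in C].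

Definition pmono (n : nat) (s t : {set 'I_n}) : poly2 n :=
  (\prod_(i in s) 'X_i) * (\prod_(j in t) (1 - 'X_j)).

Definition is_pseudo_monomial (n : nat) (f : poly2 n) : Prop :=
  exists s t : {set 'I_n}, [disjoint s & t] /\ f = pmono s t.

Definition mdvd (n : nat) (g f : poly2 n) : Prop := exists h : poly2 n, f = h * g.

Definition rho (n : nat) (s : {set 'I_n}) : poly2 n := pmono s (~: s).

Definition in_JC (n : nat) (C : code n) (f : poly2 n) : Prop :=
  exists g : {set 'I_n} -> poly2 n,
    f = \sum_(s in ~: C) g s * rho s.

Definition in_CF (n : nat) (C : code n) (f : poly2 n) : Prop :=
  [/\ is_pseudo_monomial f, in_JC C f &
      forall g : poly2 n, is_pseudo_monomial g -> in_JC C g -> mdvd g f -> g = f].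

Definition embed_last (m : nat) (p : poly2 m) : poly2 m.+1 :=
  mmap (@mpolyC m.+1 F2) (fun i : 'I_m => 'X_(widen_ord (leqnSn m) i)) p.

(* Main.v *)
Require Import Defs.
From HB Require Import structures.
From mathcomp Require Import all_boot all_algebra.
From mathcomp Require Import mpoly.
Set Implicit Arguments. Unset Strict Implicit. Unset Printing Implicit Defensive.
Import GRing.Theory.
Local Open Scope ring_scope.

Section S.
Variable n : nat.
Implicit Types s t c : {set 'I_n}.

Definition chi c : 'I_n -> F2 := fun i => (i \in c)%:R.

Lemma prod_bool (I : finType) (P : pred I) (b : I -> bool) :
  \prod_(i | P i) ((b i)%:R : F2) = [forall i, P i ==> b i]%:R.
Proof.
case: (boolP [forall i, P i ==> b i]) => [/forallP H|/forallP H].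
  by rewrite big1 // => i Pi; have := H i; rewrite Pi /= => ->.
have [i] : exists i, ~~ (P i ==> b i).
  by apply/existsP; rewrite -negb_forall; apply/negP => /forallP.
rewrite negb_imply => /andP [Pi nbi].
by rewrite (bigD1 i) //= (negbTE nbi) mul0r.
Qed.

Lemma eval_pmono s t c :
  (pmono s t).@[chi c] = ((s \subset c) && [disjoint t & c])%:R.
Proof.
rewrite /pmono mevalM !rmorph_prod /=.
rewrite (eq_bigr (fun i => ((i \in c) : bool)%:R)); last by move=> i _; rewrite mevalXU.
rewrite [X in _ * X](eq_bigr (fun i => ((i \notin c) : bool)%:R)); last first.
  by move=> i _; rewrite mevalB meval1 mevalXU /chi; case: (i \in c) => /=; rewrite ?subrr ?subr0.
rewrite !prod_bool -natrM mulnb; congr (nat_of_bool (_ && _))%:R; last first.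
  rewrite disjoint_subset; apply/idP/idP.
    by move=> /forallP H; apply/subsetP => i ti; have := H i; rewrite ti /= inE.
  by move=> /subsetP H; apply/forallP => i; apply/implyP => ti; have := H i ti; rewrite inE.
apply/idP/idP.
  by move=> /forallP H; apply/subsetP => i ti; have := H i; rewrite ti.
by move=> /subsetP H; apply/forallP => i; apply/implyP => ti; apply: H.
Qed.

Definition van (C : {set {set 'I_n}}) s t :=
  forall c, c \in C -> ~~ ((s \subset c) && [disjoint t & c]).

Lemma nat_bool_eq0 (b : bool) : ((b%:R : F2) == 0) = ~~ b.
Proof. by case: b; rewrite ?oner_eq0 ?eqxx. Qed.

Lemma JC_van (C : {set {set 'I_n}}) s t : in_JC C (pmono s t) -> van C s t.
Proof.
move=> [g Hg] c cC; rewrite -nat_bool_eq0 -eval_pmono Hg.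
rewrite raddf_sum /=; apply/eqP; apply: big1 => sg sgC.
rewrite mevalM /rho eval_pmono.
case: (boolP ((sg \subset c) && [disjoint ~: sg & c])) => [/andP [H1 H2]|_]; last by rewrite mulr0.
have eq : sg = c.
  apply/eqP; rewrite eqEsubset H1 /=; move: H2; rewrite disjoint_sym disjoints_subset setCK //.
by move: sgC; rewrite eq inE cC.
Qed.

Lemma JC_add (C : {set {set 'I_n}}) f g : in_JC C f -> in_JC C g -> in_JC C (f + g).
Proof.
move=> [a Ha] [b Hb]; exists (fun s => a s + b s).
by rewrite Ha Hb -big_split /=; apply: eq_bigr => i _; rewrite mulrDl.
Qed.

Lemma disjU1 (i : 'I_n) s t : i \notin t -> [disjoint s & t] -> [disjoint i |: s & t].
Proof.
rewrite !disjoints_subset => iT /subsetP H; apply/subsetP => j; rewrite !inE.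
by case/orP => [/eqP -> // | /H]; rewrite inE.
Qed.

Lemma pmono_split s t i : i \notin s -> i \notin t ->
  pmono s t = pmono (i |: s) t + pmono s (i |: t).
Proof.
move=> iS iT; rewrite /pmono big_setU1 //= [in X in _ + X]big_setU1 //=.
set P := \prod_(j in s) _; set Q := \prod_(j in t) _.
by rewrite mulrCA -!mulrA -mulrDl addrC subrK mul1r.
Qed.

Lemma van_JC_ind (C : {set {set 'I_n}}) k : forall s t, (#|~: (s :|: t)| <= k)%N ->
  [disjoint s & t] -> van C s t -> in_JC C (pmono s t).
Proof.
elim: k => [|k IH] s t.
  rewrite leqn0 cards_eq0 => /eqP H0 dst vst.
  have tE : t = ~: s.
    apply/setP => i; rewrite inE; case: (boolP (i \in s)) => iS /=.
      by apply/negP => iT; move: dst; rewrite disjoints_subset => /subsetP /(_ i iS); rewrite inE iT.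
    have : i \notin ~: (s :|: t) by rewrite H0 inE.
    by rewrite !inE negbK (negbTE iS).
  have sC : s \notin C.
    apply/negP => sC; move: (vst s sC); rewrite tE => /negP; apply; apply/andP; split; [exact/subsetP | by rewrite disjoint_sym disjoints_subset setCK; apply/subsetP].
  exists (fun x => (x == s)%:R); rewrite (bigD1 s) ?inE //= eqxx mul1r big1 ?addr0 ?tE //.
  by move=> x /andP [_ /negbTE ->]; rewrite mul0r.
move=> Hk dst vst.
case: (boolP [exists i, i \in ~: (s :|: t)]) => [/existsP [i]|H]; last first.
  apply: (IH) => //; suff -> : ~: (s :|: t) = set0 by rewrite cards0.
  apply/setP => j; rewrite [in RHS]inE.
  by apply/negP => Hj; move/existsP: H; apply; exists j.
rewrite !inE negb_or => /andP [iS iT].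
have card_dec : forall s' t', s' :|: t' = i |: (s :|: t) -> (#|~: (s' :|: t')| <= k)%N.
  move=> s' t' ->.
  move: Hk; rewrite (cardsD1 i (~: (s :|: t))) !inE negb_or iS iT /= add1n ltnS.
  apply: leq_trans; apply: subset_leq_card; apply/subsetP => j; rewrite !inE.
  by rewrite negb_or => /andP [-> ->].
rewrite (pmono_split iS iT); apply: JC_add; apply: IH.
- by apply: card_dec; rewrite setUA.
- by apply: disjU1.
- move=> c cC; apply/negP => /andP [/subsetP H1 H2]; move/negP: (vst c cC); apply.
  by rewrite H2 andbT; apply/subsetP => j js; apply: H1; rewrite inE js orbT.
- by apply: card_dec; rewrite setUCA setUA.
- by rewrite disjoint_sym; apply: disjU1; rewrite // disjoint_sym.
- move=> c cC; apply/negP => /andP [H1 H2]; move/negP: (vst c cC); apply.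
  rewrite H1 /=; move: H2; rewrite !disjoints_subset => /subsetP H2.
  by apply/subsetP => j jt; apply: H2; rewrite inE jt orbT.
Qed.

Lemma JC_pm (C : {set {set 'I_n}}) s t : [disjoint s & t] ->
  in_JC C (pmono s t) <-> van C s t.
Proof. by move=> d; split; [apply: JC_van | apply: (@van_JC_ind C _ s t (leqnn _) d)]. Qed.



Lemma dvd_sub s t s' t' : [disjoint s & t] -> mdvd (pmono s' t') (pmono s t) ->
  s' \subset s /\ t' \subset t.
Proof.
move=> d [h Hh].
have E1 := congr1 (meval (chi s)) Hh.
have E2 := congr1 (meval (chi (~: t))) Hh.
rewrite eval_pmono mevalM eval_pmono in E1.
rewrite eval_pmono mevalM eval_pmono in E2.
split.
  move: E1; rewrite fintype.subxx disjoint_sym d /=.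
  by case: (s' \subset s) => //=; rewrite mulr0 => /eqP; rewrite oner_eq0.
have dt : [disjoint t & ~: t] by rewrite disjoints_subset setCK fintype.subxx.
move: E2; rewrite -disjoints_subset d dt /=.
case: (boolP [disjoint t' & ~: t]); last by rewrite andbF mulr0 => _ /eqP; rewrite oner_eq0.
by rewrite disjoints_subset setCK.
Qed.

Lemma sub_dvd s t s' t' : s' \subset s -> t' \subset t -> mdvd (pmono s' t') (pmono s t).
Proof.
move=> ss tt; exists (pmono (s :\: s') (t :\: t')).
rewrite /pmono (@big_setID _ _ _ _ s s') (@big_setID _ _ _ _ t t') /=.
rewrite (setIidPr ss) (setIidPr tt).
by rewrite mulrACA mulrC.
Qed.

Lemma X_pmono (i : 'I_n) : 'X_i = pmono [set i] set0.
Proof. by rewrite /pmono big_set1 big_set0 mulr1. Qed.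

Lemma Xc_pmono (i : 'I_n) : 1 - 'X_i = pmono set0 [set i].
Proof. by rewrite /pmono big_set1 big_set0 mul1r. Qed.

End S.

Section E.
Variable m : nat.
Local Notation w := (widen_ord (leqnSn m)).

Lemma w_inj : injective w.
Proof. by move=> i j /(congr1 val) /= /val_inj. Qed.

Lemma embed_pmono (a b : {set 'I_m}) : embed_last (pmono a b) = pmono (w @: a) (w @: b).
Proof.
rewrite /embed_last /pmono rmorphM !rmorph_prod /=.
rewrite !big_imset /=; try by move=> i j _ _; apply: w_inj.
congr (_ * _); apply: eq_bigr => i _; rewrite ?rmorphB ?rmorph1 /= mmapX mmap1U //.
Qed.

Lemma max_notin_w (a : {set 'I_m}) : ord_max \notin w @: a.
Proof.
apply/imsetP => -[i _ /(congr1 val) /= E].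
by have := ltn_ord i; rewrite -E ltnn.
Qed.

Lemma pre_w (a : {set 'I_m}) : w @^-1: (w @: a) = a.
Proof.
apply/setP => i; rewrite inE; apply/imsetP/idP => [[j ja /w_inj -> //]|ia].
by exists i.
Qed.

Lemma w_pre (s : {set 'I_m.+1}) : ord_max \notin s -> w @: (w @^-1: s) = s.
Proof.
move=> ns; apply/setP => j; apply/imsetP/idP => [[i]|js].
  by rewrite inE => iS ->.
have jm : (j < m)%N.
  have := ltn_ord j; rewrite ltnS leq_eqVlt => /orP [/eqP E|//].
  have jE : j = ord_max by apply: val_inj.
  by move: js; rewrite jE (negbTE ns).
by exists (Ordinal jm); rewrite ?inE; have -> : w (Ordinal jm) = j by apply: val_inj.
Qed.

Lemma key (a b : {set 'I_m}) (c : {set 'I_m.+1}) :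
  (w @: a \subset c) && [disjoint w @: b & c] =
  (a \subset w @^-1: c) && [disjoint b & w @^-1: c].
Proof. by rewrite !disjoints_subset !sub_imset_pre preimsetC. Qed.

Lemma van_transfer (C : code m.+1) (a b : {set 'I_m}) :
  van C (w @: a) (w @: b) <-> van (code_del_last C) a b.
Proof.
split.
  move=> H c' /imsetP [c cC ->]; have := H c cC; rewrite key //.
move=> H c cC; rewrite key; apply: H; apply/imsetP; exists c => //.
Qed.

Lemma disj_im (a b : {set 'I_m}) : [disjoint a & b] -> [disjoint w @: a & w @: b].
Proof. by rewrite !disjoints_subset sub_imset_pre preimsetC pre_w. Qed.

Lemma disj_pre (s t : {set 'I_m.+1}) : [disjoint s & t] -> [disjoint w @^-1: s & w @^-1: t].
Proof. by rewrite !disjoints_subset -preimsetC; apply: preimsetS. Qed.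

End E.

Theorem lemma2p1 (m : nat) (C : code m.+1) (hC : code_conv C) (f : poly2 m.+1) :
  (exists2 g : poly2 m, in_CF (code_del_last C) g & f = embed_last g) <->
  [/\ in_CF C f,
      ~ mdvd 'X_(@ord_max m) f &
      ~ mdvd (1 - 'X_(@ord_max m)) f].
Proof.
set w := widen_ord (leqnSn m).
split.
  move=> [g [[a [b [dab ->]]] gJ gmin] ->].
  have fE := embed_pmono a b; rewrite fE.
  have dab' := disj_im dab.
  split.
  - split.
    + by exists (w @: a), (w @: b).
    + by apply/(JC_pm _ dab')/van_transfer/(JC_pm _ dab).
    + move=> h [s' [t' [dst' ->]]] hJ hd.
      have [ss tt] := dvd_sub dab' hd.
      have ns : ord_max \notin s'.
        by apply/negP => /(subsetP ss); apply/negP; apply: max_notin_w.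
      have nt : ord_max \notin t'.
        by apply/negP => /(subsetP tt); apply/negP; apply: max_notin_w.
      have d0 := disj_pre dst'.
      have E : pmono (w @^-1: s') (w @^-1: t') = pmono a b.
        apply: gmin.
        * by exists (w @^-1: s'), (w @^-1: t').
        * apply/(JC_pm _ d0)/van_transfer; rewrite !w_pre //.
          by apply/(JC_pm _ dst').
        * apply: sub_dvd.
            by rewrite -(pre_w a); apply: preimsetS.
          by rewrite -(pre_w b); apply: preimsetS.
      by rewrite -(w_pre ns) -(w_pre nt) -!embed_pmono E.
  - rewrite X_pmono => /(dvd_sub dab') [/subsetP H _].
    by have := H _ (set11 _); apply/negP; apply: max_notin_w.
  - rewrite Xc_pmono => /(dvd_sub dab') [_ /subsetP H].
    by have := H _ (set11 _); apply/negP; apply: max_notin_w.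
move=> [[[s [t [dst fE]]] fJ fmin] nX nXc].
have ns : ord_max \notin s.
  apply/negP => ms; apply: nX; rewrite X_pmono fE; apply: sub_dvd => //.
  by rewrite sub1set.
  by apply: sub0set.
have nt : ord_max \notin t.
  apply/negP => mt; apply: nXc; rewrite Xc_pmono fE; apply: sub_dvd => //.
  by apply: sub0set.
  by rewrite sub1set.
have d0 := disj_pre dst.
exists (pmono (w @^-1: s) (w @^-1: t)); last by rewrite embed_pmono !w_pre.
split.
- by exists (w @^-1: s), (w @^-1: t).
- apply/(JC_pm _ d0)/van_transfer; rewrite !w_pre //.
  by apply/(JC_pm _ dst); rewrite -fE.
- move=> h [a [b [dab ->]]] hJ hd.
  have [sa sb] := dvd_sub d0 hd.
  have dab' := disj_im dab.
  have E : pmono (w @: a) (w @: b) = f.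
    apply: fmin.
    + by exists (w @: a), (w @: b).
    + by apply/(JC_pm _ dab')/van_transfer/(JC_pm _ dab).
    + rewrite fE; apply: sub_dvd.
        by rewrite -(w_pre ns); apply: imsetS.
      by rewrite -(w_pre nt); apply: imsetS.
  have [E1 E2] : w @: a = s /\ w @: b = t.
    have Est : pmono (w @: a) (w @: b) = pmono s t by rewrite E fE.
    have [H1 H2] : s \subset w @: a /\ t \subset w @: b.
      by apply: (dvd_sub dab'); exists 1; rewrite mul1r Est.
    have [H3 H4] : w @: a \subset s /\ w @: b \subset t.
      by apply: (dvd_sub dst); exists 1; rewrite mul1r Est.
    by split; apply/eqP; rewrite eqEsubset ?H1 ?H2 ?H3 ?H4.
  by rewrite -E1 -E2 !pre_w.
Qed.
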